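(* Let $n\geqslant 1$ and let $T$ be a basic tree with $2n$ vertices. Let $D$ be the directed graph obtained from $T$ by replacing every edge $ab$ of $T$ by the two directed edges $\overrightarrow{ab}$ and $\overrightarrow{ba}$. Then $\Delta(D)$ is homotopy equivalent to the sphere $\mathbb{S}^{n-1}$.
   Context: A basic tree is either a tree with exactly two vertices, or a tree with $2n$ vertices, $n$ of which are leaves and $n$ non-leaves, such that every non-leaf is adjacent to exactly one leaf. For a finite directed graph $D$, $\Delta(D)$ has the directed edges of $D$ as vertices and the edge sets of directed forests in $D$ (vertex-disjoint unions of rooted directed trees; equivalently, edge sets in which every vertex has in-degree at most $1$ and there is no directed cycle) as faces. *)

(* Defs.v *)
From HB Require Import structures.
From mathcomp Require Import all_boot all_order all_algebra.
From mathcomp Require Import all_classical all_reals all_analysis.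
Unset Printing Implicit Defensive.
Import Order.TTheory GRing.Theory Num.Theory.

Import numFieldNormedType.Exports.
Local Open Scope classical_set_scope.
Local Open Scope ring_scope.

Definition simple_graph (V : finType) (e : rel V) : Prop :=
  symmetric e /\ irreflexive e.
Arguments simple_graph {V} e.

Definition graph_connected (V : finType) (e : rel V) : Prop :=
  forall x y : V, connect e x y.
Arguments graph_connected {V} e.

Definition graph_acyclic (V : finType) (e : rel V) : Prop :=
  forall p : seq V, uniq p -> (3 <= size p)%N -> ~~ cycle e p.
Arguments graph_acyclic {V} e.

Definition is_tree (V : finType) (e : rel V) : Prop :=
  simple_graph e /\ graph_connected e /\ graph_acyclic e.
Arguments is_tree {V} e.

Definition degree (V : finType) (e : rel V) (x : V) : nat := #|[set y | e x y]%SET|.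
Arguments degree {V} e x.

Definition is_leaf (V : finType) (e : rel V) (x : V) : bool := degree e x == 1%N.
Arguments is_leaf {V} e x.

Definition basic_tree (V : finType) (e : rel V) : Prop :=
  is_tree e /\
  ( #|V| = 2%N \/
    exists n : nat,
      [/\ #|V| = (2 * n)%N,
          #|[set x | is_leaf e x]%SET| = n,
          #|[set x | ~~ is_leaf e x]%SET| = n &
          forall x : V, ~~ is_leaf e x ->
            #|[set y | e x y & is_leaf e y]%SET| = 1%N]).
Arguments basic_tree {V} e.

Definition arc (W : finType) (D : rel W) := {p : W * W | D p.1 p.2}.
Arguments arc {W} D.

Definition double_orient (V : finType) (e : rel V) : rel V :=
  fun a b => e a b || e b a.
Arguments double_orient {V} e _ _.

Definition directed_forest (W : finType) (D : rel W) (F : {set arc D}) : Prop :=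
  (forall v : W, #|[set a in F | (val a).2 == v]%SET| <= 1)%N /\
  (forall p : seq W, p != [::] ->
     ~~ cycle (fun u v => [exists a in F, val a == (u, v)]) p).
Arguments directed_forest {W} D F.

(* Geometric realization of a finite abstract simplicial complex on the finite
   vertex set A with faces [face]: the subspace of R^A (with its product =
   Euclidean topology) of points x with x >= 0,
   sum x = 1 and support of x a face. *)
Definition realization (R : realType) (A : finType) (face : {set A} -> Prop)
  : set {ptws A -> R} :=
  [set x | (forall a, 0 <= x a) /\ \sum_(a : A) x a = 1 /\
           face [set a | x a != 0]%SET].
Arguments realization R {A} face _.

Definition Delta_realization (R : realType) (W : finType) (D : rel W) : set {ptws arc D -> R} :=
  realization R (@directed_forest W D).
Arguments Delta_realization R {W} D _.

(* The unit sphere S^(m) in R^(m+1); here given as the sphere in R^k,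
   i.e. S^(k-1). *)
Definition sphere_in (R : realType) (k : nat) : set {ptws 'I_k -> R} :=
  [set x | \sum_(i < k) x i ^+ 2 = 1].
Arguments sphere_in R k _.

Definition homotopic_on (R : realType) (X Y : topologicalType)
  (A : set X) (B : set Y) (f g : X -> Y) : Prop :=
  exists H : R * X -> Y,
    [/\ {within `[(0:R), 1] `*` A, continuous H},
        (forall x, A x -> H (0, x) = f x /\ H (1, x) = g x) &
        (forall t x, `[(0:R), 1]%classic t -> A x -> B (H (t, x)))].
Arguments homotopic_on R {X Y} A B f g.

Definition homotopy_equivalent (R : realType) (X Y : topologicalType)
  (A : set X) (B : set Y) : Prop :=
  exists (f : X -> Y) (g : Y -> X),
    [/\ {within A, continuous f}, {within B, continuous g},
        (forall x, A x -> B (f x)) /\ (forall y, B y -> A (g y)),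
        homotopic_on R A A (g \o f) id &
        homotopic_on R B B (f \o g) id].
Arguments homotopy_equivalent R {X Y} A B.

(* Main.v *)
Require Import Defs.
From HB Require Import structures.
From mathcomp Require Import all_boot all_order all_algebra.
From mathcomp Require Import all_classical all_reals all_analysis.
From mathcomp Require Import lra.
Import numFieldNormedType.Exports.
Import Order.TTheory GRing.Theory Num.Theory.
Local Open Scope classical_set_scope.
Local Open Scope ring_scope.

Section Gen.
Variable R : realType.

Lemma ptws_cvg (A : finType) {T : Type} (F : set_system T) {FF : Filter F}
  (f : T -> {ptws A -> R}) (l : {ptws A -> R}) :
  (forall a, (fun x => f x a) @ F --> l a) -> f @ F --> l.
Proof.
move=> H; apply/cvg_sup => a; apply/cvg_image.
- by rewrite eqEsubset; split => // r _; exists (fun _ => r).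
move=> U /H /= HU; exists ((@proj A (fun _ => R) a) @^-1` U) => //.
rewrite image_preimage //.
by rewrite eqEsubset; split => // r _; exists (fun _ => r).
Qed.

Lemma coord_cvg (A : finType) {T : Type} (F : set_system T) {FF : Filter F}
  (f : T -> {ptws A -> R}) (l : {ptws A -> R}) :
  f @ F --> l -> forall a, (fun x => f x a) @ F --> l a.
Proof.
move=> H a; exact: (cvg_comp _ _ H (@proj_continuous A (fun _ => R) a l)).
Qed.

Lemma cvg_sumR {T : Type} (F : set_system T) {FF : Filter F} (I : Type) (r : seq I)
  (P : pred I) (f : I -> T -> R) (l : I -> R) :
  (forall i, P i -> f i @ F --> l i) ->
  (fun x => \sum_(i <- r | P i) f i x) @ F --> \sum_(i <- r | P i) l i.
Proof.
move=> H; elim: r => [|i r IH].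
  rewrite big_nil; under eq_cvg do rewrite big_nil; exact: cvg_cst.
rewrite big_cons; under eq_cvg do rewrite big_cons.
case: ifPn => Pi //; exact: cvgD (H i Pi) IH.
Qed.

Lemma cvg_sqrtR {T : Type} (F : set_system T) {FF : Filter F} (f : T -> R) l :
  f @ F --> l -> (fun x => Num.sqrt (f x)) @ F --> Num.sqrt l.
Proof. move=> H; apply: cvg_comp H _; exact: sqrt_continuous. Qed.

Lemma cvg_ptws_sub (A : finType) (B : set {ptws A -> R}) (U : topologicalType) (f : {ptws A -> R} -> U) :
  (forall x, B x -> f @ nbhs x --> f x) -> {within B, continuous f}.
Proof.
move=> H; apply/subspace_continuousP => x Bx; apply: cvg_within_filter; exact: H.
Qed.
End Gen.

Set Implicit Arguments.
Unset Strict Implicit.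
Section Anal.
Variable R : realType.
Variables (W : finType) (D : rel W) (p : W -> W) (n : nat) (s : 'I_n -> W).
Hypotheses (Dsym : forall x y, D x y = D y x) (Dp : forall x, D x (p x))
  (pK : involutive p)
  (Dleaf : forall u w z, D u w -> u != p w -> D z (p w) -> z = w).
Hypotheses (s_inj : injective s) (s_cov : forall x, exists i, x = s i \/ x = p (s i))
  (s_np : forall i j, s i != p (s j)).

Definition ma (v : W) : Defs.arc D := exist (fun q : W * W => D q.1 q.2) (v, p v) (Dp v).
Definition matching (a : Defs.arc D) : bool := (val a).1 == p (val a).2.
Definition gg (a : Defs.arc D) : Defs.arc D := if matching a then a else ma (val a).2.
Definition rel_of (F : {set Defs.arc D}) : rel W := fun u v => [exists a in F, val a == (u, v)].

Lemma ma_inj : injective ma.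
Proof. by move=> u v /(congr1 (fun a : Defs.arc D => (val a).1)). Qed.

Lemma matching_ma v : matching (ma v).
Proof. by rewrite /matching /= pK. Qed.

Lemma matchingE a : matching a -> a = ma (val a).1.
Proof.
move=> /eqP h; apply: val_inj => /=; case: a h => [[u w] Duw] /= ->.
by rewrite pK.
Qed.

Lemma gg_matching a : matching (gg a).
Proof. by rewrite /gg; case: ifP => // _; exact: matching_ma. Qed.

Lemma gg_ma v : gg (ma v) = ma v.
Proof. by rewrite /gg matching_ma. Qed.

Lemma arcD (a : Defs.arc D) : D (val a).1 (val a).2.
Proof. exact: valP a. Qed.

Lemma arc_eq_ma (a : Defs.arc D) w : (val a).1 = w -> (val a).2 = p w -> a = ma w.
Proof. by case: a => [[u v'] Da] /= e1 e2; apply: val_inj; rewrite /= e1 e2. Qed.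

Lemma forest_sub (A B : {set Defs.arc D}) : A \subset B ->
  directed_forest D B -> directed_forest D A.
Proof.
move=> AB [H1 H2]; split.
  move=> v; apply: leq_trans (H1 v); apply: subset_leq_card.
  apply/fintype.subsetP => a; rewrite !inE => /andP [aA ->]; by rewrite (fintype.subsetP AB).
move=> q q0; apply: contra (H2 q q0); apply: sub_cycle => u v /existsP [a /andP [aA e]].
by apply/existsP; exists a; rewrite (fintype.subsetP AB).
Qed.

Lemma forest_no2 (F : {set Defs.arc D}) v : directed_forest D F ->
  ~~ ((ma v \in F) && (ma (p v) \in F)).
Proof.
move=> [_ H] ; apply/negP => /andP [h1 h2].
move/negP: (H [:: v; p v] isT); apply; rewrite /= andbT; apply/andP; split;
  apply/existsP; [exists (ma v) | exists (ma (p v))]; by rewrite ?h1 ?h2 /= ?pK.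
Qed.

Lemma forest_pairs (A : {set Defs.arc D}) : (forall a, a \in A -> matching a) ->
  (forall v, ~~ ((ma v \in A) && (ma (p v) \in A))) -> directed_forest D A.
Proof.
move=> Am An; split.
  move=> v; apply: leq_trans (_ : #|[set ma (p v)]%SET| <= 1)%N; last by rewrite cards1.
  apply: subset_leq_card; apply/fintype.subsetP => a; rewrite !inE => /andP [aA /eqP av].
  rewrite (matchingE (Am a aA)); move: (Am a aA); rewrite /matching av => /eqP ->.
  by [].
case=> [//|x q] _; apply/negP => cq.
have xq : x \in x :: q by rewrite mem_head.
have /existsP [a /andP [aA /eqP va]] := next_cycle cq xq.
set y := next (x :: q) x in va.
have yq : y \in x :: q by rewrite mem_next.
have /existsP [b /andP [bA /eqP vb]] := next_cycle cq yq.
move: (Am a aA) (Am b bA); rewrite /matching va vb /= => /eqP xy _.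
have eb : b = ma y by rewrite {1}(matchingE (Am b bA)) vb.
have ea : a = ma x by rewrite {1}(matchingE (Am a aA)) va.
by have := An y; rewrite -eb bA -xy -ea aA.
Qed.

Lemma in_union (F : {set Defs.arc D}) a : (a \in F) || (a \in gg @: F) ->
  a \in F \/ exists2 c, c \in F & (~~ matching c /\ a = ma (val c).2).
Proof.
move=> /orP [aF|/imsetP [c cF ->]]; first by left.
rewrite /gg; case: ifP => m; first by left.
by right; exists c => //; rewrite m.
Qed.


Lemma nm_leaf (c : Defs.arc D) z : ~~ matching c -> D z (p (val c).2) -> z = (val c).2.
Proof. by move=> nm; apply: Dleaf (arcD c) nm. Qed.


Lemma forest_union (F : {set Defs.arc D}) : directed_forest D F ->
  directed_forest D (F :|: gg @: F).
Proof.
move=> [H1 H2]; split.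
  move=> v; case: (boolP [exists c in F, ~~ matching c && (p (val c).2 == v)]).
    move=> /existsP [c /andP [cF /andP [nm /eqP pv]]].
    apply: leq_trans (_ : #|[set ma (val c).2]%SET| <= 1)%N; last by rewrite cards1.
    apply: subset_leq_card; apply/fintype.subsetP => a; rewrite !inE => /andP [aU /eqP av].
    case: (in_union aU) => [aF|[c' c'F [nm' ea]]].
      have Da : D (val a).1 (p (val c).2) by rewrite pv -av; exact: arcD.
      have e1 := nm_leaf nm Da.
      by apply/eqP; apply: arc_eq_ma; [exact: e1 | rewrite av pv].
    rewrite ea /= in av; rewrite ea; apply/eqP; congr ma; apply: (inv_inj pK); by rewrite pv.
  move=> nex; apply: leq_trans (H1 v); apply: subset_leq_card.
  apply/fintype.subsetP => a; rewrite !inE => /andP [aU /eqP av].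
  case: (in_union aU) => [aF|[c' c'F [nm' ea]]]; first by rewrite aF av eqxx.
  exfalso; move/negP: nex; apply; apply/existsP; exists c'.
  by rewrite c'F nm' /= -av ea.
move=> q q0; apply: contra (H2 q q0) => cq; have cq2 := cq.
apply: (sub_in_cycle (P := mem q)) cq; last by apply/allP.
move=> x y xq yq /existsP [a /andP [aU /eqP va]].
rewrite finset.in_setU in aU; case: (in_union aU) => [aF|[c cF [nm ea]]].
  by apply/existsP; exists a; rewrite aF va eqxx.
exfalso.
have {}va : (x, y) = ((val c).2, p (val c).2) by rewrite -va ea.
case: va => _ ey0; have ey : y = p (val c).2 := ey0; clear ey0.
have /existsP [b /andP [bU /eqP vb]] := next_cycle cq2 yq.
set z := next q y in vb.
have Db : D z (p (val c).2) by rewrite -ey Dsym -[y]/((y, z).1) -[z in D _ z]/((y, z).2) -vb; exact: arcD.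
have ez := nm_leaf nm Db.
rewrite finset.in_setU in bU; case: (in_union bU) => [bF|[c' c'F [nm' eb]]].
  have : (1 < #|[set a in F | (val a).2 == (val c).2]%SET|)%N.
    apply: leq_trans (_ : #|[set c; b]%SET| <= _)%N.
      rewrite cards2; case: eqP => // cb; move: nm; rewrite cb /matching vb /= ez -ey.
      by rewrite eqxx.
    apply: subset_leq_card; apply/fintype.subsetP => d; rewrite !inE.
    by case/orP => /eqP ->; rewrite ?cF ?bF ?vb /= ?ez eqxx.
  by rewrite ltnNge H1.
have : (val b).1 = (val c').2 by rewrite eb.
rewrite vb /= => ey'.
have Dc' : D (val c').1 (p (val c).2).
  rewrite -ey ey'; exact: arcD.
have e2 := nm_leaf nm Dc'.
by move: nm'; rewrite /matching -ey' ey pK e2 eqxx.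
Qed.
Local Notation X := {ptws Defs.arc D -> R}.
Local Notation Y := {ptws 'I_n -> R}.

Definition Gm (x : X) : X := fun a => \sum_b (if gg b == a then x b else 0).
Definition cc (x : X) (i : 'I_n) : R := Gm x (ma (s i)) - Gm x (ma (p (s i))).
Definition nrm (c : 'I_n -> R) : R := Num.sqrt (\sum_i c i ^+ 2).
Definition Phi (x : X) : Y := fun i => cc x i / nrm (cc x).
Definition posp (r : R) : R := (`|r| + r) / 2.
Definition negp (r : R) : R := (`|r| - r) / 2.
Definition numP (y : Y) (a : Defs.arc D) : R :=
  \sum_i ((if a == ma (s i) then posp (y i) else 0) + (if a == ma (p (s i)) then negp (y i) else 0)).
Definition Psi (y : Y) : X := fun a => numP y a / \sum_i `|y i|.
Definition Asupp (y : Y) : {set Defs.arc D} :=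
  [set a | [exists i, ((a == ma (s i)) && (0 < y i)) || ((a == ma (p (s i))) && (y i < 0))]]%SET.
Definition supp (x : X) : {set Defs.arc D} := [set a | x a != 0]%SET.
Lemma pospE r : posp r = if 0 <= r then r else 0.
Proof.
rewrite /posp; case: ifPn => h; first by rewrite ger0_norm //; lra.
rewrite ler0_norm; first lra. by rewrite ltW // ltNge.
Qed.
Lemma negpE r : negp r = if r < 0 then - r else 0.
Proof.
rewrite /negp; case: ifPn => h; first by rewrite ltr0_norm //; lra.
rewrite ger0_norm; first lra. by rewrite leNgt.
Qed.
Lemma posp_ge0 r : 0 <= posp r.
Proof. by rewrite pospE; case: ifP. Qed.
Lemma negp_ge0 r : 0 <= negp r.
Proof. rewrite negpE; case: ifP => // h; rewrite oppr_ge0 ltW //. Qed.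
Lemma pospDnegp r : posp r + negp r = `|r|.
Proof. rewrite /posp /negp; lra. Qed.
Lemma pospBnegp r : posp r - negp r = r.
Proof. rewrite /posp /negp; lra. Qed.
Local Notation Delta := (realization R (directed_forest D)).

Lemma Gm_ge0 x a : (forall b, 0 <= x b) -> 0 <= Gm x a.
Proof. by move=> h; apply: sumr_ge0 => b _; case: ifP. Qed.

Lemma Gm_ge x b : (forall b, 0 <= x b) -> x b <= Gm x (gg b).
Proof.
move=> h; rewrite /Gm (bigD1 b) //= eqxx lerDl; apply: sumr_ge0 => c _; by case: ifP.
Qed.

Lemma Gm_supp x a : Gm x a != 0 -> a \in gg @: supp x.
Proof.
apply: contraR => na; rewrite /Gm big1 // => b _; case: ifP => // /eqP gb.
apply/eqP; apply: contraR na => xb; rewrite -gb; apply: imset_f; by rewrite inE.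
Qed.

Lemma Delta_ge0 x : Delta x -> forall b, 0 <= x b.
Proof. by case. Qed.

Lemma Delta_forestU x : Delta x -> directed_forest D (supp x :|: gg @: supp x).
Proof. by case=> _ [_ h]; apply: forest_union. Qed.

Lemma Delta_ex x : Delta x -> exists b, 0 < x b.
Proof.
move=> hx; have h0 := Delta_ge0 hx; case: hx => _ [h1 _].
case: (boolP [exists b, x b != 0]) => [/existsP [b xb]|].
  by exists b; rewrite lt_neqAle eq_sym xb h0.
rewrite negb_exists => /forallP h; move: h1; rewrite big1 => [/eqP|b _].
  by rewrite eq_sym oner_eq0.
by apply/eqP; move: (h b); rewrite negbK.
Qed.

Lemma matching_cov a : matching a -> exists i, a = ma (s i) \/ a = ma (p (s i)).
Proof.
move=> /matchingE ->; have [i [->|->]] := s_cov (val a).1; [by exists i; left | by exists i; right].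
Qed.

Lemma Gm_pair x v : Delta x -> Gm x (ma v) = 0 \/ Gm x (ma (p v)) = 0.
Proof.
move=> hx; have := forest_no2 v (Delta_forestU hx).
case: (eqVneq (Gm x (ma v)) 0) => [|h1]; first by left.
case: (eqVneq (Gm x (ma (p v))) 0) => [|h2]; first by right.
by rewrite !finset.in_setU (Gm_supp h1) (Gm_supp h2) !orbT.
Qed.

Lemma cc_nz x : Delta x -> exists i, cc x i != 0.
Proof.
move=> hx; have [b xb] := Delta_ex hx; have h0 := Delta_ge0 hx.
have hb : 0 < Gm x (gg b) by apply: lt_le_trans xb (Gm_ge _ h0).
have [i [e|e]] := matching_cov (gg_matching b); exists i; rewrite /cc; rewrite e in hb.
  case: (Gm_pair (s i) hx) => h; first by rewrite h ltxx in hb.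
  by rewrite h subr0 gt_eqF.
case: (Gm_pair (s i) hx) => h; last by rewrite h ltxx in hb.
by rewrite h sub0r oppr_eq0 gt_eqF.
Qed.

Lemma nrm_gt0 (c : 'I_n -> R) : (exists i, c i != 0) -> 0 < nrm c.
Proof.
move=> [i ci]; rewrite /nrm sqrtr_gt0 (bigD1 i) //=.
have h1 : 0 < c i ^+ 2 by rewrite lt_neqAle eq_sym sqrf_eq0 ci sqr_ge0.
have h2 : 0 <= \sum_(j | j != i) c j ^+ 2 by apply: sumr_ge0 => j _; exact: sqr_ge0.
lra.
Qed.

Lemma sum_sq_div (c : 'I_n -> R) : 0 < nrm c -> \sum_i (c i / nrm c) ^+ 2 = 1.
Proof.
move=> hn; under eq_bigr do rewrite expr_div_n.
rewrite -mulr_suml /nrm sqr_sqrtr; last by apply: sumr_ge0 => j _; exact: sqr_ge0.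
apply: divff; move: hn; rewrite /nrm sqrtr_gt0; exact: lt0r_neq0.
Qed.

Lemma Phi_sph x : Delta x -> sphere_in R n (Phi x).
Proof. move=> hx; exact: sum_sq_div (nrm_gt0 (cc_nz hx)). Qed.

Lemma Ssum_gt0 y : sphere_in R n y -> 0 < \sum_i `|y i|.
Proof.
move=> hy; case: (boolP [exists i, y i != 0]) => [/existsP [i yi]|].
  rewrite (bigD1 i) //=.
  have h1 : 0 < `|y i| by rewrite normr_gt0.
  have h2 : 0 <= \sum_(j | j != i) `|y j| by apply: sumr_ge0 => j _.
  lra.
rewrite negb_exists => /forallP h; move: hy; rewrite /sphere_in /= big1 => [/eqP|j _].
  by rewrite eq_sym oner_eq0.
by move: (h j); rewrite negbK => /eqP ->; rewrite expr0n.
Qed.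

Lemma Psi_supp y a : Psi y a != 0 -> a \in Asupp y.
Proof.
rewrite /Psi; apply: contraR => na; apply/eqP; rewrite /numP big1 ?mul0r // => i _.
move: na; rewrite finset.in_set negb_exists => /forallP /(_ i); rewrite negb_or.
case/andP => h1 h2.
have -> : (if a == ma (s i) then posp (y i) else 0) = 0.
  case: (a == ma (s i)) h1 => //= h1; rewrite pospE; case: ifP => // h.
  by apply/eqP; rewrite eq_le h andbT leNgt.
have -> : (if a == ma (p (s i)) then negp (y i) else 0) = 0.
  by case: (a == ma (p (s i))) h2 => //= h2; rewrite negpE (negbTE h2).
by rewrite addr0.
Qed.

Lemma Asupp_forest y : directed_forest D (Asupp y).
Proof.
apply: forest_pairs.
  move=> a; rewrite inE => /existsP [i /orP [] /andP [/eqP -> _]]; exact: matching_ma.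
move=> v; apply/negP; rewrite !inE => /andP [/existsP [i hi] /existsP [j hj]].
move: hi hj; rewrite !(inj_eq ma_inj) (inj_eq (inv_inj pK)).
case/orP => /andP [/eqP vi yi]; case/orP => /andP [/eqP vj yj].
- by move: (s_np j i); rewrite -vj vi eqxx.
- by move: vj; rewrite vi => /s_inj eij; rewrite -eij in yj; move: (lt_trans yj yi); rewrite ltxx.
- by move: vj; rewrite vi pK => /s_inj eij; rewrite -eij in yj; move: (lt_trans yi yj); rewrite ltxx.
- by move: (s_np j i); rewrite -vj vi eqxx.
Qed.

Lemma Psi_Delta y : sphere_in R n y -> Delta (Psi y).
Proof.
move=> hy; have hS := Ssum_gt0 hy; split; [|split].
- move=> a; rewrite /Psi; apply: divr_ge0; last exact: ltW; apply: sumr_ge0 => i _.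
  by apply: addr_ge0; case: ifP => _ //; [exact: posp_ge0 | exact: negp_ge0].
- rewrite /Psi -mulr_suml /numP exchange_big /=.
  under eq_bigr do rewrite big_split /= -!big_mkcond !big_pred1_eq pospDnegp.
  by rewrite divff // gt_eqF.
- apply: forest_sub (Asupp_forest y); apply/fintype.subsetP => a; rewrite inE.
  exact: Psi_supp.
Qed.

Lemma numP_s y i : numP y (ma (s i)) = posp (y i).
Proof.
rewrite /numP (bigD1 i) //= eqxx (inj_eq ma_inj) (negbTE (s_np i i)) addr0 big1 ?addr0 //.
move=> j ji; rewrite !(inj_eq ma_inj) (negbTE (s_np i j)) (inj_eq s_inj) eq_sym (negbTE ji).
by rewrite addr0.
Qed.

Lemma numP_ps y i : numP y (ma (p (s i))) = negp (y i).
Proof.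
rewrite /numP (bigD1 i) //= eqxx (inj_eq ma_inj) eq_sym (negbTE (s_np i i)) add0r big1 ?addr0 //.
move=> j ji; rewrite !(inj_eq ma_inj) eq_sym (negbTE (s_np j i)) (inj_eq (inv_inj pK)).
by rewrite (inj_eq s_inj) eq_sym (negbTE ji) addr0.
Qed.

Lemma Psi_nm y b : ~~ matching b -> Psi y b = 0.
Proof.
move=> nm; rewrite /Psi /numP big1 ?mul0r // => i _.
case: (eqVneq b (ma (s i))) => [e|_]; first by move: nm; rewrite e matching_ma.
case: (eqVneq b (ma (p (s i)))) => [e|_]; first by move: nm; rewrite e matching_ma.
by rewrite addr0.
Qed.

Lemma Gm_Psi y : Gm (Psi y) = Psi y.
Proof.
apply/funext => a; rewrite /Gm.
transitivity (\sum_b (if b == a then Psi y b else 0)).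
  apply: eq_bigr => b _; case: (boolP (matching b)) => m; first by rewrite /gg m.
  by rewrite (Psi_nm y m); case: ifP; case: ifP.
by rewrite -big_mkcond big_pred1_eq.
Qed.

Lemma Phi_Psi y : sphere_in R n y -> Phi (Psi y) = y.
Proof.
move=> hy; have hS := Ssum_gt0 hy; set S := \sum_i `|y i| in hS.
have hS0 : S != 0 by rewrite gt_eqF.
have ec : cc (Psi y) = fun i => y i / S.
  apply/funext => i; rewrite /cc Gm_Psi /Psi numP_s numP_ps -mulrBl pospBnegp //.
have en : nrm (cc (Psi y)) = S^-1.
  rewrite ec /nrm; under eq_bigr do rewrite expr_div_n.
  rewrite -mulr_suml hy mul1r -exprVn sqrtr_sqr ger0_norm //.
  by rewrite invr_ge0 ltW.
apply/funext => i; rewrite /Phi en ec /= invrK divfK //.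
Qed.

Definition Hd (q : R * X) : X := fun a => q.1 * q.2 a + (1 - q.1) * Psi (Phi q.2) a.

Lemma Psi_Phi_supp x : Delta x -> supp (Psi (Phi x)) \subset gg @: supp x.
Proof.
move=> hx; have hN := nrm_gt0 (cc_nz hx); have h0 := Delta_ge0 hx.
apply/fintype.subsetP => a; rewrite finset.in_set => /Psi_supp; rewrite finset.in_set.
case/existsP => i /orP [] /andP [/eqP -> hi]; apply: Gm_supp.
  move: hi; rewrite /Phi ltr_pdivlMr // mul0r /cc => hi.
  have g2 := Gm_ge0 (ma (p (s i))) h0; rewrite gt_eqF //; lra.
move: hi; rewrite /Phi ltr_pdivrMr // mul0r /cc => hi.
have g2 := Gm_ge0 (ma (s i)) h0; rewrite gt_eqF //; lra.
Qed.

Lemma Hd_Delta t x : 0 <= t -> t <= 1 -> Delta x -> Delta (Hd (t, x)).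
Proof.
move=> t0 t1 hx; have h0 := Delta_ge0 hx; have hP := Psi_Delta (Phi_sph hx).
have hP0 := Delta_ge0 hP; split; [|split].
- move=> a; rewrite /Hd /=; apply: addr_ge0; apply: mulr_ge0 => //; lra.
- rewrite /Hd /= big_split /= -!mulr_sumr.
  case: hx => _ [-> _]; case: hP => _ [-> _]; lra.
- apply: forest_sub (Delta_forestU hx); apply/fintype.subsetP => a; rewrite finset.in_set.
  rewrite /Hd /= finset.in_setU => ha.
  case: (eqVneq (x a) 0) => [xa|xa]; last by rewrite finset.in_set xa.
  apply/orP; right; apply: (fintype.subsetP (Psi_Phi_supp hx)); rewrite finset.in_set.
  by apply: contra ha => /eqP ->; rewrite xa !mulr0 addr0.
Qed.

Section Cont.
Variables (T : Type) (F : set_system T) (FF : Filter F).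

Lemma Gm_cvg (f : T -> X) (x : X) : (forall b, (fun t => f t b) @ F --> x b) ->
  forall a, (fun t => Gm (f t) a) @ F --> Gm x a.
Proof.
move=> H a; rewrite /Gm; apply: cvg_sumR => b _.
case: (gg b == a); [exact: H | exact: cvg_cst].
Qed.

Lemma cc_cvg (f : T -> X) (x : X) : (forall b, (fun t => f t b) @ F --> x b) ->
  forall i, (fun t => cc (f t) i) @ F --> cc x i.
Proof. move=> H i; rewrite /cc; apply: cvgB; exact: Gm_cvg. Qed.

Lemma nrm_cvg (c : T -> 'I_n -> R) (c0 : 'I_n -> R) :
  (forall i, (fun t => c t i) @ F --> c0 i) -> (fun t => nrm (c t)) @ F --> nrm c0.
Proof.
move=> H; rewrite /nrm; apply: cvg_sqrtR; apply: cvg_sumR => i _.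
under eq_cvg do rewrite expr2; rewrite expr2; exact: cvgM (H i) (H i).
Qed.

Lemma Phi_cvg (f : T -> X) (x : X) : (forall b, (fun t => f t b) @ F --> x b) ->
  nrm (cc x) != 0 -> forall i, (fun t => Phi (f t) i) @ F --> Phi x i.
Proof.
move=> H nz i; rewrite /Phi; apply: cvgM; first exact: cc_cvg.
by apply: cvgV => //; apply: nrm_cvg; exact: cc_cvg.
Qed.

Lemma posp_cvg (g : T -> R) l : g @ F --> l -> (fun t => posp (g t)) @ F --> posp l.
Proof. move=> H; rewrite /posp; apply: cvgM; [apply: cvgD => //; exact: cvg_norm | exact: cvg_cst]. Qed.

Lemma negp_cvg (g : T -> R) l : g @ F --> l -> (fun t => negp (g t)) @ F --> negp l.
Proof. move=> H; rewrite /negp; apply: cvgM; [apply: cvgB => //; exact: cvg_norm | exact: cvg_cst]. Qed.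

Lemma Psi_cvg (g : T -> Y) (y : Y) : (forall i, (fun t => g t i) @ F --> y i) ->
  \sum_i `|y i| != 0 -> forall a, (fun t => Psi (g t) a) @ F --> Psi y a.
Proof.
move=> H nz a; rewrite /Psi; apply: cvgM.
  rewrite /numP; apply: cvg_sumR => i _; apply: cvgD.
    case: (a == ma (s i)); [exact: posp_cvg | exact: cvg_cst].
  case: (a == ma (p (s i))); [exact: negp_cvg | exact: cvg_cst].
apply: cvgV => //; apply: cvg_sumR => i _; exact: cvg_norm.
Qed.
End Cont.

Lemma id_coord (x : X) : forall b, (fun t : X => t b) @ nbhs x --> x b.
Proof. move=> b; exact: (@proj_continuous _ (fun _ => R) b x). Qed.

Lemma id_coordY (y : Y) : forall i, (fun t : Y => t i) @ nbhs y --> y i.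
Proof. move=> i; exact: (@proj_continuous _ (fun _ => R) i y). Qed.

Lemma abstract_main : homotopy_equivalent R Delta (sphere_in R n).
Proof.
exists Phi, Psi; split.
- apply: cvg_ptws_sub => x hx; apply: ptws_cvg => i; apply: Phi_cvg.
    exact: id_coord.
  exact: lt0r_neq0 (nrm_gt0 (cc_nz hx)).
- apply: cvg_ptws_sub => y hy; apply: ptws_cvg => a; apply: Psi_cvg.
    exact: id_coordY.
  exact: lt0r_neq0 (Ssum_gt0 hy).
- by split; [exact: Phi_sph | exact: Psi_Delta].
- exists Hd; split.
  + apply/subspace_continuousP => -[t x] [/= ht hx]; apply: cvg_within_filter.
    apply: ptws_cvg => a; rewrite /Hd /=.
    have c1 : (fun q : R * X => q.1) @ nbhs (t, x) --> t by exact: cvg_fst.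
    have c2 : forall b, (fun q : R * X => q.2 b) @ nbhs (t, x) --> x b.
      have c2' : (fun q : R * X => q.2) @ nbhs (t, x) --> x by exact: cvg_snd.
      move=> b; exact: (cvg_comp _ _ c2' (@id_coord x b)).
    apply: cvgD; apply: cvgM => //; first by apply: cvgB => //; exact: cvg_cst.
    apply: Psi_cvg; last exact: lt0r_neq0 (Ssum_gt0 (Phi_sph hx)).
    move=> i; apply: Phi_cvg => //; exact: lt0r_neq0 (nrm_gt0 (cc_nz hx)).
  + move=> x hx; split; apply/funext => a; rewrite /Hd /=.
      by rewrite mul0r add0r subr0 mul1r.
    by rewrite mul1r subrr mul0r addr0.
  + move=> t x ht hx; move: ht; rewrite /= in_itv /= => /andP [t0 t1].
    exact: Hd_Delta.
- exists (fun q : R * Y => q.2); split.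
  + apply/subspace_continuousP => -[t y] [/= ht hy]; apply: cvg_within_filter.
    exact: cvg_snd.
  + by move=> y hy; split => //=; rewrite Phi_Psi.
  + by [].
Qed.
End Anal.

Section Tree.
Variables (V : finType) (e : rel V).
Hypotheses (esy : symmetric e) (eirr : irreflexive e) (econ : graph_connected e).

Definition nb x := odflt x [pick y | e x y].
Definition lf x := odflt x [pick y | e x y && is_leaf e y].
Definition pp x := if is_leaf e x then nb x else lf x.

Lemma leaf_nb x : is_leaf e x -> e x (nb x) /\ forall z, e x z -> z = nb x.
Proof.
rewrite /is_leaf /degree => /cards1P [y0 hy].
have hz z : e x z -> z = y0.
  by move=> ez; apply/set1P; rewrite -hy finset.in_set.
rewrite /nb; case: pickP => [y1 ey1|h] /=.
  by split => // z /hz ->; rewrite (hz _ ey1).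
have : y0 \in [set y0]%SET by rewrite set11.
by rewrite -hy finset.in_set h.
Qed.

Lemma nonleaf_lf x : #|[set y | e x y & is_leaf e y]%SET| = 1%N ->
  [/\ e x (lf x), is_leaf e (lf x) & forall z, e x z -> is_leaf e z -> z = lf x].
Proof.
move=> /eqP /cards1P [y0 hy].
have hz z : e x z -> is_leaf e z -> z = y0.
  by move=> ez lz; apply/set1P; rewrite -hy finset.in_set ez lz.
rewrite /lf; case: pickP => [y1 /andP [ey1 ly1]|h] /=.
  by split => // z ez lz; rewrite (hz _ ez lz) (hz _ ey1 ly1).
have : y0 \in [set y0]%SET by rewrite set11.
by rewrite -hy finset.in_set h.
Qed.

Lemma De a b : double_orient e a b = e a b.
Proof. by rewrite /double_orient (esy b a) orbb. Qed.

Lemma DDsym : forall x y, double_orient e x y = double_orient e y x.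
Proof. by move=> x y; rewrite !De esy. Qed.

Section Gen2.
Hypotheses (H4 : forall x, ~~ is_leaf e x -> #|[set y | e x y & is_leaf e y]%SET| = 1%N)
  (Hnl : forall x, is_leaf e x -> ~~ is_leaf e (nb x)).

Lemma pp_leaf x : ~~ is_leaf e x -> is_leaf e (pp x).
Proof. by move=> nl; rewrite /pp (negbTE nl); case: (nonleaf_lf (H4 nl)). Qed.

Lemma pp_nonleaf x : is_leaf e x -> ~~ is_leaf e (pp x).
Proof. by move=> l; rewrite /pp l; exact: Hnl. Qed.

Lemma Dpp : forall x, double_orient e x (pp x).
Proof.
move=> x; rewrite De /pp; case: ifP => l; first by case: (leaf_nb l).
by case: (nonleaf_lf (H4 (negbT l))).
Qed.

Lemma ppK : involutive pp.
Proof.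
move=> x; case: (boolP (is_leaf e x)) => l.
  have nl := pp_nonleaf l; rewrite {1}/pp (negbTE nl).
  case: (nonleaf_lf (H4 nl)) => _ _ h; symmetry; apply: h => //.
  rewrite /pp l esy; by case: (leaf_nb l).
have ll := pp_leaf l; rewrite {1}/pp ll.
case: (leaf_nb ll) => _ h; symmetry; apply: h.
rewrite esy /pp (negbTE l); by case: (nonleaf_lf (H4 l)).
Qed.

Lemma Dleafpp : forall u w z, double_orient e u w -> u != pp w ->
  double_orient e z (pp w) -> z = w.
Proof.
move=> u w z; rewrite !De => euw nu ez.
case: (boolP (is_leaf e w)) => l.
  case: (leaf_nb l) => _ h; have hu : u = nb w by apply: h; rewrite esy.
  by move: nu; rewrite /pp l -hu eqxx.
have ll := pp_leaf l; case: (leaf_nb ll) => _ h.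
have hw : w = nb (pp w).
  by apply: h; rewrite esy /pp (negbTE l); case: (nonleaf_lf (H4 l)).
have hz : z = nb (pp w) by apply: h; rewrite esy.
by rewrite hz -hw.
Qed.
End Gen2.
End Tree.

Section Tree2.
Variables (V : finType) (e : rel V).
Hypotheses (esy : symmetric e) (eirr : irreflexive e) (econ : graph_connected e).

Lemma nb_exists x y : x != y -> exists z, e x z.
Proof.
move=> xy; have /connectP [q pq ly] := econ x y.
case: q pq ly => [_ ly|z q /= /andP [exz _] _]; last by exists z.
by move: xy; rewrite ly /= eqxx.
Qed.

Lemma Hnl_of (h3 : (2 < #|V|)%N) x : is_leaf e x -> ~~ is_leaf e (nb e x).
Proof.
move=> l; apply/negP => l2.
case: (leaf_nb l) => exy hx; set y := nb e x in exy hx l2.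
case: (leaf_nb l2) => _ hy.
have yx : x = nb e y by apply: hy; rewrite esy.
pose A := [set x; y]%SET.
have clA : closed_mem e (mem A).
  move=> u v euv; rewrite !finset.in_set2.
  case: (eqVneq u x) => [ux|ux].
    by rewrite ux in euv *; rewrite (hx v euv) !eqxx !orbT.
  case: (eqVneq u y) => [uy|uy].
    have vx : v = x by rewrite yx; apply: hy; rewrite -uy.
    by rewrite vx eqxx.
  case: (eqVneq v x) => [vx|vx].
    have : u = y by apply: hx; rewrite esy -vx.
    by move/eqP; rewrite (negbTE uy).
  case: (eqVneq v y) => [vy|vy] //.
  have : u = x by rewrite yx; apply: hy; rewrite esy -vy.
  by move/eqP; rewrite (negbTE ux).
case: (boolP [exists z, z \notin A]) => [/existsP [z zA]|].
  have := closed_connect clA (econ x z); rewrite (negbTE zA) finset.in_set2 eqxx //.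
rewrite negb_exists => /forallP hA.
have : (#|V| <= #|A|)%N.
  rewrite -cardsT; apply: subset_leq_card; apply/fintype.subsetP => z _.
  by move: (hA z); rewrite negbK.
rewrite cards2; case: (x != y); rewrite leqNgt ?h3 //.
by move=> /negP; apply; apply: ltn_trans h3.
Qed.

Lemma all_leaf2 (h2 : #|V| = 2%N) x : is_leaf e x.
Proof.
have c1 : #|[set~ x]%SET| = 1%N by rewrite cardsC1 h2.
have /cards1P [y hy] : #|[set~ x]%SET| == 1%N by rewrite c1.
have yin : y \in [set~ x]%SET by rewrite hy set11.
have xy : x != y by move: yin; rewrite finset.in_setC1 eq_sym.
have [z exz] := nb_exists xy.
rewrite /is_leaf /degree eqn_leq; apply/andP; split.
  rewrite -c1; apply: subset_leq_card; apply/fintype.subsetP => w.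
  rewrite finset.in_set finset.in_setC1 => ew; apply/eqP => wx; by rewrite wx eirr in ew.
by apply/card_gt0P; exists z; rewrite finset.in_set.
Qed.
End Tree2.

Unset Implicit Arguments.

Theorem mainTheorem10 (R : realType) (V : finType) (e : rel V) (n : nat) :
  (1 <= n)%N -> #|V| = (2 * n)%N -> basic_tree e ->
  homotopy_equivalent R (Delta_realization R (double_orient e)) (sphere_in R n).
Proof.
move=> n1 hV [[[esy eirr] [econ _]] hb].
rewrite /Delta_realization.
have Dsym := DDsym esy.
case: (eqVneq #|V| 2%N) => [h2|h2].
  have en : n = 1%N.
    by apply/eqP; rewrite -(eqn_pmul2l (isT : (0 < 2)%N)) -hV h2.
  subst n.
  have : (0 < #|V|)%N by rewrite h2.
  case/card_gt0P => x0 _.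
  have al := all_leaf2 eirr econ h2.
  have Dp : forall x, double_orient e x (nb e x).
    by move=> x; rewrite (De esy); case: (leaf_nb (al x)).
  apply: (@abstract_main R V (double_orient e) (nb e) 1 (fun _ => x0) Dsym Dp).
  - move=> x; case: (leaf_nb (al (nb e x))) => _ h; symmetry; apply: h.
    rewrite esy; by case: (leaf_nb (al x)).
  - move=> u w z; rewrite !(De esy) => euw nu _.
    case: (leaf_nb (al w)) => _ h; move: nu; rewrite -(h u) ?eqxx //; by rewrite esy.
  - by move=> i j _; rewrite (ord1 i) (ord1 j).
  - move=> x; exists ord0; case: (eqVneq x x0) => [->|xx0]; first by left.
    right; have c1 : #|[set~ x0]%SET| = 1%N by rewrite cardsC1 h2.
    have /cards1P [y hy] : #|[set~ x0]%SET| == 1%N by rewrite c1.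
    have h1 : x \in [set~ x0]%SET by rewrite finset.in_setC1.
    have h3 : nb e x0 \in [set~ x0]%SET.
      rewrite finset.in_setC1; apply/eqP => ex.
      by case: (leaf_nb (al x0)) => ex0 _; rewrite ex eirr in ex0.
    by move: h1 h3; rewrite hy => /set1P -> /set1P ->.
  - move=> i j; apply/eqP => ex.
    by case: (leaf_nb (al x0)) => ex0 _; rewrite -ex eirr in ex0.
case: hb => [h|[m [hm hl hnl h4]]]; first by rewrite h eqxx in h2.
have em : m = n by apply/eqP; rewrite -(eqn_pmul2l (isT : (0 < 2)%N)) -hV hm.
subst m.
have h3 : (2 < #|V|)%N.
  rewrite ltn_neqAle eq_sym h2 /= hV; apply: (@leq_trans 2) => //.
  have hh : (2 * 1 <= 2 * n)%N by rewrite leq_pmul2l.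
  exact: hh.
have Hnl := Hnl_of esy econ h3.
pose S := [set x | ~~ is_leaf e x]%SET.
have hS : #|S| = n by rewrite /S hnl em.
pose s (i : 'I_n) : V := enum_val (cast_ord (esym hS) i).
have sS i : ~~ is_leaf e (s i).
  by have := enum_valP (cast_ord (esym hS) i); rewrite finset.in_set.
apply: (@abstract_main R V (double_orient e) (pp e) n s Dsym (Dpp esy h4)
  (ppK esy h4 Hnl) (Dleafpp esy h4)).
- move=> i j /enum_val_inj; exact: cast_ord_inj.
- move=> x; case: (boolP (is_leaf e x)) => l.
    have nl := pp_nonleaf Hnl l.
    have xS : pp e x \in S by rewrite finset.in_set.
    exists (cast_ord hS (enum_rank_in xS (pp e x))); right.
    by rewrite /s cast_ordK (enum_rankK_in xS xS) ppK.
  have xS : x \in S by rewrite finset.in_set.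
  exists (cast_ord hS (enum_rank_in xS x)); left.
  by rewrite /s cast_ordK (enum_rankK_in xS xS).
- move=> i j; apply/eqP => ex; have := pp_leaf h4 (sS j); rewrite -ex.
  by rewrite (negbTE (sS i)).
Qed.
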